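(* Let $m\ge 1$ and let $\alpha_0,\dots,\alpha_{m-1},\beta_0,\dots,\beta_{m-1}$ be real numbers. Consider the element \[ P=\sum_{k=0}^{m-1}\alpha_kx^k+\sum_{k=0}^{m-1}\beta_k\,yx^k \] both in $\mathbb{C}[\mathbb{Z}/m\mathbb{Z}\times\mathbb{Z}/2\mathbb{Z}]$, where $\mathbb{Z}/m\mathbb{Z}\times\mathbb{Z}/2\mathbb{Z}=\langle x,y\mid x^m,y^2,[x,y]\rangle$, and in $\mathbb{C}[D_m]$, where $D_m=\langle x,y\mid x^m,y^2,yxyx\rangle$ (same coefficients, same words). Assume $P$ is reciprocal in $\mathbb{C}[\mathbb{Z}/m\mathbb{Z}\times\mathbb{Z}/2\mathbb{Z}]$ (then it is also reciprocal in $\mathbb{C}[D_m]$). Let $k=\sum_k(|\alpha_k|+|\beta_k|)$ and $|\lambda|<1/k$. Then \[ m_{\mathbb{Z}/m\mathbb{Z}\times\mathbb{Z}/2\mathbb{Z}}(P,\lambda)=m_{D_m}(P,\lambda). \]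
   Context: For a group $\Gamma$ and $Q=\sum_{g\in\Gamma}c_g g\in\mathbb{C}\Gamma$ (finite sum), the reciprocal is $Q^*=\sum_g\overline{c_g}\,g^{-1}$, and $Q$ is reciprocal if $Q=Q^*$. For reciprocal $P\in\mathbb{C}\Gamma$ with $l_1$-norm $k=\sum_g|c_g|$ and $|\lambda|<1/k$, define $m_\Gamma(P,\lambda)=-\sum_{n\ge1}a_n\lambda^n/n$, where $a_n$ is the coefficient of the identity element of $\Gamma$ in $P^n$. *)

(* Defs.v *)
From HB Require Import structures.
From mathcomp Require Import all_boot all_order all_algebra all_fingroup.
From mathcomp Require Import complex.
From mathcomp Require Import all_classical all_reals all_analysis.

Set Implicit Arguments.
Unset Strict Implicit.
Unset Printing Implicit Defensive.

Import Order.TTheory GRing.Theory Num.Theory.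
Import numFieldTopology.Exports numFieldNormedType.Exports.
Local Open Scope ring_scope.

(* The two groups of order 2m, m = n.+1.  An element (i, a) stands     *)
(* for the word x^i y^a.                                               *)

Definition ZmZ2 (n : nat) : Type := ('I_n.+1 * bool)%type.
HB.instance Definition _ n := Finite.on (ZmZ2 n).

Section ZmZ2Group.
Variable n : nat.
Local Notation G := (ZmZ2 n).
Definition zz_mul (u v : G) : G := ((u.1 + v.1)%R, addb u.2 v.2).
Definition zz_one : G := (0%R, false).
Definition zz_inv (u : G) : G := ((- u.1)%R, u.2).
Lemma zz_mulA : associative zz_mul.
Proof. by move=> [i a] [j b] [k c]; rewrite /zz_mul /= addrA addbA. Qed.
Lemma zz_mul1 : left_id zz_one zz_mul.
Proof. by move=> [i a]; rewrite /zz_mul /= add0r. Qed.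
Lemma zz_mulV : left_inverse zz_one zz_inv zz_mul.
Proof. by move=> [i a]; rewrite /zz_mul /= addNr addbb. Qed.
HB.instance Definition _ := Finite_isGroup.Build G zz_mulA zz_mul1 zz_mulV.
End ZmZ2Group.

(* D_m = < x, y | x^m, y^2, yxyx >, with x^i y^a * x^j y^b = x^(i + (-1)^a j) y^(a+b) *)
Definition Dih (n : nat) : Type := ('I_n.+1 * bool)%type.
HB.instance Definition _ n := Finite.on (Dih n).

Section DihGroup.
Variable n : nat.
Local Notation G := (Dih n).
Definition sgn (a : bool) (j : 'I_n.+1) : 'I_n.+1 := if a then (- j)%R else j.
Definition dh_mul (u v : G) : G := ((u.1 + sgn u.2 v.1)%R, addb u.2 v.2).
Definition dh_one : G := (0%R, false).
Definition dh_inv (u : G) : G := (sgn (~~ u.2) u.1, u.2).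
Lemma dh_mulA : associative dh_mul.
Proof.
move=> [i a] [j b] [k c]; rewrite /dh_mul /= addbA.
by case: a; case: b; rewrite /sgn /= ?opprD ?opprK addrA.
Qed.
Lemma dh_mul1 : left_id dh_one dh_mul.
Proof. by move=> [i a]; rewrite /dh_mul /= add0r. Qed.
Lemma dh_mulV : left_inverse dh_one dh_inv dh_mul.
Proof. by move=> [i [|]]; rewrite /dh_mul /sgn /= ?addrN ?addNr. Qed.
HB.instance Definition _ := Finite_isGroup.Build G dh_mulA dh_mul1 dh_mulV.
End DihGroup.

Definition zz_x n : ZmZ2 n := ((Zp1 : 'I_n.+1), false).
Definition zz_y n : ZmZ2 n := ((0%R : 'I_n.+1), true).
Definition dh_x n : Dih n := ((Zp1 : 'I_n.+1), false).
Definition dh_y n : Dih n := ((0%R : 'I_n.+1), true).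

Section GroupAlgebra.
Variable R : realType.
Local Notation C := R[i].
Variable gT : finGroupType.

Definition galg := {ffun gT -> C}.

Definition gdelta (g : gT) : galg := [ffun h => (h == g)%:R].

Definition gmul (f h : galg) : galg :=
  [ffun z => \sum_(g : gT) f g * h ((g^-1 * z)%g)].

Definition gpow (f : galg) (n : nat) : galg := iter n (gmul f) (gdelta 1%g).

Definition grecip (f : galg) : galg := [ffun g => (f (g^-1)%g)^*].
Definition greciprocal (f : galg) : Prop := f = grecip f.

Definition gcoef1 (f : galg) (n : nat) : C := gpow f n 1%g.

(* m_G(P, lambda) = - sum_{n>=1} a_n lambda^n / n, as the limit of the
   partial sums of the series with general term (reindexed n -> n.+1) *)
Definition mahler_term (f : galg) (l : C) (n : nat) : C :=
  gcoef1 f n.+1 * l ^+ n.+1 / n.+1%:R.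
Definition mahlerG (f : galg) (l : C) : C :=
  - limn (series (mahler_term f l : nat -> (C : numClosedFieldType))) : C.

Definition Pelem (m : nat) (alpha beta : 'I_m -> R) (x y : gT) : galg :=
  \sum_(k < m) ((alpha k)%:C%C *: gdelta (x ^+ k)%g
                + (beta k)%:C%C *: gdelta (y * x ^+ k)%g).
End GroupAlgebra.

(* Main.v *)
Require Import Defs.
From HB Require Import structures.
From mathcomp Require Import all_boot all_order all_algebra all_fingroup.
From mathcomp Require Import complex.
From mathcomp Require Import all_classical all_reals all_analysis.
Import Order.TTheory GRing.Theory Num.Theory.
Import numFieldTopology.Exports numFieldNormedType.Exports.
Local Open Scope ring_scope.
Section S.
Variables (R : realType) (n : nat).
Local Notation C := R[i].
Local Notation ZG := (Defs_ZmZ2__canonical__fingroup_FinGroup n).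
Local Notation DG := (Defs_Dih__canonical__fingroup_FinGroup n).
Lemma conjr (x : R) : Num.conj (x%:C%C : C) = x%:C%C.
Proof. exact: conjc_real. Qed.
Lemma zz_mulE (u v : ZmZ2 n) : (@mulg ZG u v) = ((u.1 + v.1)%R, addb u.2 v.2).
Proof. reflexivity. Qed.
Lemma zz_invE (u : ZmZ2 n) : (@invg ZG u) = ((- u.1)%R, u.2).
Proof. reflexivity. Qed.
Lemma dh_mulE (u v : Dih n) : (@mulg DG u v) = ((u.1 + sgn u.2 v.1)%R, addb u.2 v.2).
Proof. reflexivity. Qed.
Lemma dh_invE (u : Dih n) : (@invg DG u) = (sgn (~~ u.2) u.1, u.2).
Proof. reflexivity. Qed.
Lemma zz1 : (1%g : ZG) = (0%R, false). Proof. reflexivity. Qed.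
Lemma dh1 : (1%g : DG) = (0%R, false). Proof. reflexivity. Qed.
Lemma sum_zz (F : ZmZ2 n -> C) : \sum_(g : ZmZ2 n) F g = \sum_(i < n.+1) \sum_(a : bool) F (i, a).
Proof. rewrite pair_big /=. exact: (eq_bigr _ (fun p _ => congr1 F (surjective_pairing p))). Qed.
Lemma sum_dh (F : Dih n -> C) : \sum_(g : Dih n) F g = \sum_(i < n.+1) \sum_(a : bool) F (i, a).
Proof. rewrite pair_big /=. exact: (eq_bigr _ (fun p _ => congr1 F (surjective_pairing p))). Qed.

Lemma inZp_ord (k : 'I_n.+1) : inZp k = k.
Proof. by apply: val_inj; rewrite /= modn_small. Qed.

Lemma zz_xk (k : nat) : (@natexp ZG (zz_x n) k) = (inZp k, false).
Proof.
elim: k => [|k IH]; first by rewrite expg0 zz1; congr pair; apply: val_inj; rewrite /= mod0n.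
rewrite expgS IH zz_mulE /=; congr pair; apply: val_inj => /=.
by rewrite modnDm add1n.
Qed.
Lemma dh_xk (k : nat) : (@natexp DG (dh_x n) k) = (inZp k, false).
Proof.
elim: k => [|k IH]; first by rewrite expg0 dh1; congr pair; apply: val_inj; rewrite /= mod0n.
rewrite expgS IH dh_mulE /=; congr pair; apply: val_inj => /=.
by rewrite modnDm add1n.
Qed.

Lemma pick_sum (c d : 'I_n.+1 -> C) (f : 'I_n.+1 -> 'I_n.+1) (finv : involutive f)
   (i : 'I_n.+1) (a : bool) :
  \sum_(k < n.+1) (c k * ((i, a) == (k, false))%:R + d k * ((i, a) == (f k, true))%:R)
  = if a then d (f i) else c i.
Proof.
rewrite big_split /= (bigD1 i) //= [X in _ + X](bigD1 (f i)) //= finv !xpair_eqE !eqxx /=.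
rewrite !big1 ?addr0.
- by case: a; rewrite /= ?mulr0 ?mulr1 ?add0r ?addr0.
- move=> k /negPf kn; rewrite xpair_eqE.
  have -> : (i == f k) = false.
    by apply/negP => /eqP ik; move: kn; rewrite ik finv eqxx.
  by rewrite mulr0.
- by move=> k /negPf kn; rewrite xpair_eqE eq_sym kn mulr0.
Qed.


Lemma gmul_eq (F H : galg R ZG) (F' H' : galg R DG) :
  (forall i a, F' (i,a) = F (i,a)) -> (forall i a, H' (i,a) = H (i,a)) ->
  (forall i a, H (-i,a) = H (i,a)) -> forall i a, gmul F' H' (i,a) = gmul F H (i,a).
Proof.
move=> hF hH sH i a; rewrite !ffunE sum_zz sum_dh; apply: eq_bigr => j _.
rewrite !big_bool /= !dh_invE !dh_mulE !zz_invE !zz_mulE /sgn /= !hF !hH.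
by rewrite -[X in _ = _ * X + _]sH opprD opprK addrC.
Qed.

Lemma gmul_sym (F H : galg R ZG) :
  (forall i a, F (-i,a) = F (i,a)) ->
  (forall i a, H (-i,a) = H (i,a)) -> forall i a, gmul F H (-i,a) = gmul F H (i,a).
Proof.
move=> sF sH i a; rewrite !ffunE !sum_zz (reindex_inj oppr_inj) /=.
apply: eq_bigr => j _; apply: eq_bigr => b _.
rewrite !zz_invE !zz_mulE /= opprK sF; congr (_ * _).
by rewrite -[RHS]sH opprD opprK.
Qed.

Lemma gpow_eq (F : galg R ZG) (F' : galg R DG) :
  (forall i a, F' (i,a) = F (i,a)) -> (forall i a, F (-i,a) = F (i,a)) ->
  forall k, (forall i a, gpow F' k (i,a) = gpow F k (i,a)) /\
            (forall i a, gpow F k (-i,a) = gpow F k (i,a)).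
Proof.
move=> hF sF; elim=> [|k [IH1 IH2]].
  split=> i a; rewrite /gpow /= !ffunE ?zz1 ?dh1 !xpair_eqE //.
  by rewrite oppr_eq0.
split=> i a; rewrite /gpow iterS -/(gpow F k) -/(gpow F' k).
  exact: gmul_eq.
exact: gmul_sym.
Qed.

Variables (alpha beta : 'I_n.+1 -> R).


Lemma Pzz_E i a : Pelem alpha beta (zz_x n) (zz_y n) (i,a) = if a then (beta i)%:C%C else (alpha i)%:C%C.
Proof.
rewrite /Pelem sum_ffunE.
rewrite -(pick_sum (fun k => (alpha k)%:C%C) (fun k => (beta k)%:C%C) id (fun _ => erefl)).
apply: eq_bigr => k _; rewrite !ffunE zz_xk zz_mulE /= inZp_ord add0r.
by [].
Qed.

Lemma Pdh_E i a : Pelem alpha beta (dh_x n) (dh_y n) (i,a) = if a then (beta (-i))%:C%C else (alpha i)%:C%C.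
Proof.
rewrite /Pelem sum_ffunE.
rewrite -(pick_sum (fun k => (alpha k)%:C%C) (fun k => (beta k)%:C%C) (fun k => -k) (@opprK _)).
apply: eq_bigr => k _; rewrite !ffunE dh_xk dh_mulE /= inZp_ord add0r.
by [].
Qed.


Lemma recip_sym (H : greciprocal (Pelem alpha beta (zz_x n) (zz_y n))) i a :
  Pelem alpha beta (zz_x n) (zz_y n) (-i, a) = Pelem alpha beta (zz_x n) (zz_y n) (i, a).
Proof.
rewrite /greciprocal in H. have := congr1 (fun f : galg R ZG => f (i,a)) H; rewrite /grecip /= ffunE zz_invE /= !Pzz_E.
by case: a => ->; rewrite conjr.
Qed.

Lemma fd_fz (H : greciprocal (Pelem alpha beta (zz_x n) (zz_y n))) i a :
  Pelem alpha beta (dh_x n) (dh_y n) (i, a) = Pelem alpha beta (zz_x n) (zz_y n) (i, a).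
Proof.
apply: etrans (Pdh_E i a) _; apply: esym; apply: etrans (Pzz_E i a) _.
case: a => //; have := recip_sym H i true; by rewrite !Pzz_E => ->.
Qed.
End S.

Lemma mahler_ext (R : realType) (g1 g2 : finGroupType) (f1 : galg R g1) (f2 : galg R g2) l :
  mahler_term f1 l =1 mahler_term f2 l -> mahlerG f1 l = mahlerG f2 l.
Proof. by move=> e; rewrite /mahlerG (funext e). Qed.

Theorem theorem7p2 (R : realType) (n : nat) (alpha beta : 'I_n.+1 -> R)
    (lambda : R[i]) :
  greciprocal (Pelem alpha beta (zz_x n) (zz_y n)) ->
  `|lambda| * (\sum_(k < n.+1) (`|alpha k| + `|beta k|))%:C%C < 1 ->
  mahlerG (Pelem alpha beta (zz_x n) (zz_y n)) lambda =
  mahlerG (Pelem alpha beta (dh_x n) (dh_y n)) lambda.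
Proof.
move=> H _.
have E k := proj1 (@gpow_eq R n _ _ (@fd_fz R n alpha beta H) (@recip_sym R n alpha beta H) k).
apply: mahler_ext => k; rewrite /mahler_term /gcoef1.
have e : gpow (Pelem alpha beta (zz_x n) (zz_y n)) k.+1 1%g = gpow (Pelem alpha beta (dh_x n) (dh_y n)) k.+1 1%g.
  rewrite zz1 dh1. exact: esym (E _ _ _).
exact: (congr1 (fun z => z * lambda ^+ k.+1 / k.+1%:R) e).
Qed.
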